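(* Let $r>0$ and let $(X_t)_{t\ge0}$ be the Brownian motion with drift $X_t = X_0+B_t-rt$ ($B$ a standard Brownian motion started at $0$ independent of $X_0$), with $\tau_0:=\inf\{t\ge0:X_t=0\}$. If $\mu$ is a probability measure on $(0,+\infty)$ such that $\int_0^\infty x^3e^{rx}\mu(dx)<+\infty$, then for any $s\ge0$, $$\mathbb{E}_\mu\big[X_s^3e^{rX_s}\mid\tau_0>s\big]<+\infty.$$
   Context: $\mathbb{E}_\mu$ denotes expectation when $X_0\sim\mu$, and $\mathbb{E}_\mu[Z\mid\tau_0>s]=\mathbb{E}_\mu[Z\mathbf{1}_{\tau_0>s}]/\mathbb{P}_\mu(\tau_0>s)$. *)

(* Defs.v *)
From HB Require Import structures.
From mathcomp Require Import all_boot all_order all_algebra.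
From mathcomp Require Import all_classical all_reals all_analysis.
Set Implicit Arguments. Unset Strict Implicit. Unset Printing Implicit Defensive.
Import Order.TTheory GRing.Theory Num.Theory numFieldTopology.Exports numFieldNormedType.Exports.
Local Open Scope classical_set_scope.
Local Open Scope ring_scope.

Definition mutually_indep {d} {T : measurableType d} {R : realType}
  (P : probability T R) (n : nat) (Y : 'I_n -> T -> R) : Prop :=
  forall A : 'I_n -> set R, (forall i, measurable (A i)) ->
    P (\bigcap_(i in [set: 'I_n]) (Y i @^-1` A i))
    = (\prod_(i < n) fine (P (Y i @^-1` A i)))%:E.

Definition standard_BM {d} {T : measurableType d} {R : realType}
  (P : probability T R) (B : R -> T -> R) : Prop :=
  [/\ (forall w, B 0 w = 0),
      (forall w, {within [set t : R | 0 <= t], continuous (fun t : R => B t w)}),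
      (forall t, 0 <= t -> measurable_fun [set: T] (B t)),
      (* Gaussian increments: B t - B s ~ N(0, t - s) for 0 <= s < t (s = t excluded: normal_prob with s = 0 is not a Dirac) *)
      (forall s t, 0 <= s -> s < t -> forall A, measurable A ->
         P ((fun w => B t w - B s w) @^-1` A) = normal_prob 0 (Num.sqrt (t - s)) A)
    &
      (forall (n : nat) (tt : 'I_n.+1 -> R), 0 <= tt ord0 ->
         (forall i : 'I_n, tt (widen_ord (leqnSn n) i) <= tt (lift ord0 i)) ->
         mutually_indep P (fun i : 'I_n => fun w =>
            B (tt (lift ord0 i)) w - B (tt (widen_ord (leqnSn n) i)) w))].

Definition indep_of_process {d} {T : measurableType d} {R : realType}
  (P : probability T R) (X0 : T -> R) (B : R -> T -> R) : Prop :=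
  forall (A : set R), measurable A ->
  forall (n : nat) (tt : 'I_n -> R) (C : 'I_n -> set R),
    (forall i, 0 <= tt i) -> (forall i, measurable (C i)) ->
    let E := \bigcap_(i in [set: 'I_n]) (B (tt i) @^-1` C i) in
    P (X0 @^-1` A `&` E) = (fine (P (X0 @^-1` A)) * fine (P E))%:E.

(* tau_0 := inf {t >= 0 : X_t = 0} (in \bar R, inf of empty set = +oo). *)
Definition hit0 {T : Type} {R : realType} (X : R -> T -> R) (w : T) : \bar R :=
  ereal_inf [set t%:E | t in [set t : R | 0 <= t /\ X t w = 0]].

Definition cond_expect {d} {T : measurableType d} {R : realType}
  (P : probability T R) (Z : T -> R) (A : set T) : \bar R :=
  ((\int[P]_(w in A) (Z w)%:E) * ((fine (P A))^-1)%:E)%E.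

(* Main.v *)
Require Import Defs.
From HB Require Import structures.
From mathcomp Require Import all_boot all_order all_algebra.
From mathcomp Require Import all_classical all_reals all_analysis.
From mathcomp Require Import ring lra measurable_realfun.
Import Order.TTheory GRing.Theory Num.Theory numFieldTopology.Exports numFieldNormedType.Exports.
Local Open Scope classical_set_scope.
Local Open Scope ring_scope.
Section realineq.
Context {R : realType}.
Definition posp (x : R) := (x + `|x|) / 2.
Lemma posp_ge0 x : 0 <= posp x.
Proof. rewrite /posp; have [x0|x0] := lerP 0 x; [rewrite ger0_norm|rewrite ltr0_norm]; lra. Qed.
Lemma posp_ge x : x <= posp x.
Proof. rewrite /posp; have [x0|x0] := lerP 0 x; [rewrite ger0_norm|rewrite ltr0_norm]; lra. Qed.
Lemma posp_pos x : 0 < x -> posp x = x.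
Proof. rewrite /posp => x0; rewrite gtr0_norm //; lra. Qed.
Lemma posp_neg x : x <= 0 -> posp x = 0.
Proof. rewrite /posp => x0; rewrite ler0_norm //; lra. Qed.

Lemma cube_le_exp (c : R) : 0 <= c -> c ^+ 3 <= 27 * expR c.
Proof.
move=> c0.
have -> : c = 3%:R * (c / 3) by field.
rewrite expRM_natl.
have h : c / 3 <= expR (c / 3) by have := expR_ge1Dx (c / 3); lra.
have h0 : 0 <= c / 3 by lra.
have : (c / 3) ^+ 3 <= expR (c / 3) ^+ 3.
  by rewrite lerXn2r // ?nnegrE ?expR_ge0.
have -> : (3%:R * (c / 3)) ^+ 3 = 27 * (c/3)^+3 by rewrite exprMn; congr (_ * _); rewrite -natrX.
lra.
Qed.

Lemma key_ineq (r x b y : R) : 0 < r -> y <= posp x + `|b| ->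
  Num.max (y ^+ 3 * expR (r * y)) 0 <=
  112 * ((posp x) ^+ 3 * expR (r * posp x) + expR r) * expR ((r + 1) * `|b|).
Proof.
move=> r0 hy.
have a0 := posp_ge0 x; set a := posp x in hy a0 *.
have c0 : 0 <= `|b| by [].
set c := `|b| in hy c0 *.
have rhs0 : 0 <= 112 * (a ^+ 3 * expR (r * a) + expR r) * expR ((r + 1) * c).
  by apply: mulr_ge0; [apply: mulr_ge0 => //; apply: addr_ge0; [apply: mulr_ge0; [apply: exprn_ge0|apply: expR_ge0]|apply: expR_ge0]|apply: expR_ge0].
have [yle|ygt] := lerP y 0.
  suff -> : Num.max (y ^+ 3 * expR (r * y)) 0 = 0 by [].
  apply/max_idPr; rewrite mulr_le0_ge0 ?expR_ge0 //.
  have : 0 <= y * y by nra.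
  rewrite exprSr expr2; nra.
have -> : Num.max (y ^+ 3 * expR (r * y)) 0 = y ^+ 3 * expR (r * y).
  apply/max_idPl; rewrite mulr_ge0 ?expR_ge0 ?exprn_ge0 //; lra.
have h1 : y ^+ 3 <= (a + c) ^+ 3 by rewrite lerXn2r // ?nnegrE; lra.
have h2 : expR (r * y) <= expR (r * a) * expR (r * c).
  by rewrite -expRD ler_expR; nra.
have h3 := @cube_le_exp c c0.
have h4 : expR (r * a) <= expR r + a ^+ 3 * expR (r * a).
  have [a1|a1] := lerP a 1.
    have : expR (r * a) <= expR r by rewrite ler_expR; nra.
    have : 0 <= a ^+ 3 * expR (r * a) by rewrite mulr_ge0 ?exprn_ge0 ?expR_ge0.
    lra.
  have : 1 <= a ^+ 3 by rewrite exprn_ege1 // ltW.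
  have := expR_gt0 (r * a); have := expR_gt0 r; nra.
have h5 : expR ((r + 1) * c) = expR (r * c) * expR c by rewrite -expRD mulrDl mul1r.
have h6 : (a + c) ^+ 3 <= 4 * (a ^+ 3 + c ^+ 3).
  have : 0 <= (a + c) * ((a - c) * (a - c)) by apply: mulr_ge0; [lra|rewrite -expr2; apply: sqr_ge0].
  rewrite !exprS !expr0 !mulr1; nra.
rewrite h5.
set E := expR (r * a) in h2 h4 *; set F := expR (r * c) in h2 *; set G := expR c in h3 *.
set er := expR r in h4 *.
have E0 : 0 < E by apply: expR_gt0.
have F0 : 0 < F by apply: expR_gt0.
have G1 : 1 <= G by have := expR_ge1Dx c; rewrite /G; lra.
have er0 : 0 < er by apply: expR_gt0.
have A0 : 0 <= a ^+ 3 * E by rewrite mulr_ge0 ?exprn_ge0 // ltW.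
have c30 : 0 <= c ^+ 3 by rewrite exprn_ge0.
have s1 : y ^+ 3 * expR (r * y) <= (a + c) ^+ 3 * (E * F).
  rewrite ler_pM // ?exprn_ge0 ?expR_ge0 //; lra.
have s2 : (a + c) ^+ 3 * (E * F) <= 4 * (a ^+ 3 + c ^+ 3) * (E * F).
  by rewrite ler_wpM2r // mulr_ge0 // ltW.
set A := a ^+ 3 * E in A0 h4 *.
set c3 := c ^+ 3 in c30 h3 s2 *.
have p1 : 0 <= (G - 1) * (A * F) by rewrite mulr_ge0 // ?subr_ge0 // mulr_ge0 // ltW.
have p2 : 0 <= (27 * G - c3) * (E * F) by rewrite mulr_ge0 // ?subr_ge0 // mulr_ge0 // ltW.
have p3 : 0 <= (er + A - E) * (G * F) by rewrite mulr_ge0 // ?subr_ge0 // mulr_ge0 // ltW; lra.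
have p4 : 0 <= er * (G * F) by rewrite !mulr_ge0 // ltW //; lra.
have eA : 4 * (a ^+ 3 + c3) * (E * F) = 4 * (A * F) + 4 * (c3 * (E * F)) by rewrite /A; ring.
apply: (le_trans s1); apply: (le_trans s2); rewrite eA.
have : 4 * (A * F) + 4 * (c3 * (E * F)) <= 112 * (A + er) * (F * G).
  nra.
by [].
Qed.
End realineq.

Section muint.
Context {R : realType}.
Definition Gf (r x : R) := (posp x) ^+ 3 * expR (r * posp x).
Definition Hf (r x : R) := 112 * (Gf r x + expR r).

Lemma measurable_posp : measurable_fun setT (@posp R).
Proof.
rewrite /posp; apply: measurable_funM => //.
apply: measurable_funD => //; exact: normr_measurable.
Qed.

Lemma measurable_Gf r : measurable_fun setT (Gf r).
Proof.
rewrite /Gf; apply: measurable_funM.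
  exact: measurable_funX measurable_posp.
apply: measurableT_comp => //; apply: measurable_funM => //; exact: measurable_posp.
Qed.

Lemma measurable_Hf r : measurable_fun setT (Hf r).
Proof.
rewrite /Hf; apply: measurable_funM => //; apply: measurable_funD => //.
exact: measurable_Gf.
Qed.

Lemma Gf_ge0 r x : 0 <= Gf r x.
Proof. by rewrite /Gf mulr_ge0 ?exprn_ge0 ?posp_ge0 ?expR_ge0. Qed.

Lemma Hf_ge0 r x : 0 <= Hf r x.
Proof. by rewrite /Hf mulr_ge0 // addr_ge0 ?Gf_ge0 ?expR_ge0. Qed.

Lemma mu_int (mu : probability R R) r :
  (\int[mu]_(x in [set x : R | (0 < x)%R]) (x ^+ 3 * expR (r * x))%:E < +oo)%E ->
  (\int[mu]_x (Hf r x)%:E < +oo)%E.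
Proof.
move=> fin.
have eG : (\int[mu]_x (Gf r x)%:E =
    \int[mu]_(x in [set x : R | (0 < x)%R]) (x ^+ 3 * expR (r * x))%:E)%E.
  rewrite [RHS]integral_mkcond; apply: eq_integral => x _.
  rewrite /patch; case: ifPn => [/set_mem /= x0|].
    by rewrite /Gf posp_pos.
  rewrite notin_setE /= => /negP; rewrite -leNgt => x0.
  by rewrite /Gf posp_neg // expr0n /= mul0r.
rewrite /Hf.
under eq_integral do rewrite EFinM.
rewrite ge0_integralZl_EFin //; last 2 first.
- by move=> x _; rewrite lee_fin addr_ge0 ?Gf_ge0 ?expR_ge0.
- by apply/measurable_EFinP; apply: measurable_funD => //; exact: measurable_Gf.
apply: lte_mul_pinfty => //.
under eq_integral do rewrite EFinD.
rewrite ge0_integralD //; last first.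
all: try (by move=> x _; rewrite lee_fin ?Gf_ge0 ?expR_ge0).
all: try (by apply/measurable_EFinP; exact: measurable_Gf).
rewrite eG; apply: lte_add_pinfty => //.
rewrite integral_cst //; apply: lte_mul_pinfty => //.
apply: (@le_lt_trans _ _ 1%E); last exact: ltry.
apply: probability_le1 => //.
Qed.
End muint.
Lemma int_le_dom d (T : measurableType d) (R : realType)
  (mu : {measure set T -> \bar R}) (D : set T) (f : T -> R) (G : T -> \bar R) :
  (forall x, (0 <= G x)%E) ->
  (forall x, D x -> ((Num.max (f x) 0)%:E <= G x)%E) ->
  (\int[mu]_(x in D) (f x)%:E <= \int[mu]_x G x)%E.
Proof.
move=> G0 fG; rewrite integralE.
apply: (@le_trans _ _ (\int[mu]_(x in D) ((fun x => (f x)%:E)^\+ x))%E).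
  rewrite -[X in (_ <= X)%E]sube0; apply: leeB => //.
  by apply: integral_ge0 => x _; apply: funeneg_ge0.
rewrite integral_mkcond ge0_integralTE; last first.
  by move=> x; rewrite /patch; case: ifP => // _; apply: funepos_ge0.
rewrite ge0_integralTE //; apply: ereal_sup_le => _ [h hle <-]; exists h => //.
move=> x; apply: (le_trans (hle x)); rewrite /patch; case: ifP => [/set_mem Dx|_].
  by rewrite funeposE -EFin_max; apply: fG.
exact: G0.
Qed.
Section joint.
Local Open Scope ereal_scope.
Context {R : realType} d (T : measurableType d) d1 d2 (T1 : measurableType d1)
  (T2 : measurableType d2) (P : probability T R) (X : T -> T1) (Y : T -> T2).
Hypotheses (mX : measurable_fun setT X) (mY : measurable_fun setT Y).

Definition jointP : set (T1 * T2) -> \bar R := pushforward P (fun w => (X w, Y w)).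
Let mf : measurable_fun setT (fun w => (X w, Y w)) := measurable_fun_pair mX mY.

Let j0 : jointP set0 = 0.
Proof. by rewrite /jointP /pushforward preimage_set0 measure0. Qed.
Let jge0 A : 0 <= jointP A.
Proof. exact: measure_ge0. Qed.
Let jsa : semi_sigma_additive jointP.
Proof.
move=> F mF tF mUF; rewrite /jointP /pushforward preimage_bigcup.
apply: measure_semi_sigma_additive.
- by move=> n; rewrite -[X in measurable X]setTI; exact: mf.
- apply/trivIsetP => /= i j _ _ ij; rewrite -preimage_setI.
  by move/trivIsetP : tF => /(_ _ _ _ _ ij) ->//; rewrite preimage_set0.
- by rewrite -preimage_bigcup -[X in measurable X]setTI; exact: mf.
Qed.
HB.instance Definition _ := isMeasure.Build _ _ _ jointP j0 jge0 jsa.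

Lemma indep_integral (mu : {sigma_finite_measure set T1 -> \bar R})
  (nu : {sigma_finite_measure set T2 -> \bar R}) (H : T1 -> R) (K : T2 -> R) :
  (forall A C, measurable A -> measurable C ->
     P (X @^-1` A `&` Y @^-1` C) = mu A * nu C) ->
  measurable_fun setT H -> measurable_fun setT K ->
  (forall x, (0 <= H x)%R) -> (forall y, (0 <= K y)%R) ->
  \int[P]_w (H (X w) * K (Y w))%:E = \int[mu]_x (H x)%:E * \int[nu]_y (K y)%:E.
Proof.
move=> ind mH mK H0 K0.
pose F := fun z : T1 * T2 => (H z.1 * K z.2)%:E.
have mF : measurable_fun setT F.
  apply/measurable_EFinP; apply: measurable_funM.
    exact: (measurableT_comp mH measurable_fst).
  exact: (measurableT_comp mK measurable_snd).
have F0 z : 0 <= F z by rewrite lee_fin mulr_ge0.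
have step1 : \int[P]_w (H (X w) * K (Y w))%:E = \int[jointP]_z F z.
  have := ge0_integral_pushforward mf P (D:=setT) measurableT mF (fun z _ => F0 z).
  rewrite preimage_setT => <-.
  by apply: eq_measure_integral => A mA _.
have step2 : \int[jointP]_z F z = \int[mu \x nu]_z F z.
  apply: eq_measure_integral => A mA _.
  apply/esym; apply: (product_measure_unique (m' := jointP)) => // A1 C mA1 mC.
rewrite step1 step2 fubini_tonelli1 //.
have inner x : fubini_F nu F x = (H x)%:E * \int[nu]_y (K y)%:E.
  rewrite /fubini_F /F /= -(ge0_integralZl_EFin nu measurableT) //.
  - by move=> y _; rewrite lee_fin.
  - exact/measurable_EFinP.
under eq_integral => x _ do rewrite inner.
rewrite ge0_integralZr //.
all: try (by move=> x _; rewrite lee_fin).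
all: try exact/measurable_EFinP.
all: try (by apply: integral_ge0 => y _; rewrite lee_fin).
Qed.
End joint.
Section gauss.
Context {R : realType}.

Lemma gauss_pt (s q y : R) : (0 < s)%R ->
  (expR (q * `|y|) * normal_pdf 0 (Num.sqrt s) y <=
   (normal_peak (Num.sqrt s) / normal_peak (Num.sqrt (2 * s)) * expR (q ^+ 2 * s)) *
   normal_pdf 0 (Num.sqrt (2 * s)) y)%R.
Proof.
move=> s0.
have ss : (Num.sqrt s != 0)%R by rewrite gt_eqF // sqrtr_gt0.
have ss2 : (Num.sqrt (2 * s) != 0)%R by rewrite gt_eqF // sqrtr_gt0 mulr_gt0.
rewrite /normal_pdf (negbTE ss) (negbTE ss2) /normal_fun !subr0.
rewrite !sqr_sqrtr; last (by rewrite ltW); last (by rewrite mulr_ge0 // ltW).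
have pk0 : (0 < normal_peak (Num.sqrt s))%R by apply: normal_peak_gt0.
have pk20 : (0 < normal_peak (Num.sqrt (2 * s)))%R by apply: normal_peak_gt0.
set p1 := normal_peak _ in pk0 *; set p2 := normal_peak _ in pk20 *.
rewrite [X in X <= _](_ : _ = p1 * (expR (q * `|y|) * expR (- y ^+ 2 / (s *+ 2)))); last by ring.
rewrite [X in _ <= X](_ : _ = p1 * (expR (q ^+ 2 * s) * expR (- y ^+ 2 / ((2 * s) *+ 2)))); last first.
  by field; rewrite gt_eqF.
rewrite ler_pM2l //.
rewrite -!expRD ler_expR.
have hy : (y ^+ 2 = `|y| ^+ 2)%R by rewrite real_normK ?num_real.
rewrite hy.
set a := `|y|.
have s2 : (s *+ 2 = 2 * s)%R by rewrite mulr2n; lra.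
have s4 : ((2 * s) *+ 2 = 4 * s)%R by rewrite mulr2n; lra.
rewrite s2 s4.
have h : (0 <= (a - 2 * q * s) ^+ 2)%R by apply: sqr_ge0.
rewrite -subr_ge0.
have -> : (q ^+ 2 * s + - a ^+ 2 / (4 * s) - (q * a + - a ^+ 2 / (2 * s)) =
   (a - 2 * q * s) ^+ 2 / (4 * s))%R by field; lra.
by rewrite divr_ge0 // mulr_ge0 // ltW.
Qed.

Lemma gauss_int (s q : R) : (0 < s)%R ->
  (\int[normal_prob 0 (Num.sqrt s)]_y (expR (q * `|y|))%:E < +oo)%E.
Proof.
move=> s0.
set nu := normal_prob 0 (Num.sqrt s).
have dom := normal_prob_dominates 0 (Num.sqrt s).
set K := fun y : R => (expR (q * `|y|))%:E.
have mK : measurable_fun setT K.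
  apply/measurable_EFinP; apply: measurableT_comp => //.
  apply: measurable_funM => //; exact: normr_measurable.
have K0 y : (0 <= K y)%E by rewrite lee_fin expR_ge0.
rewrite -(Radon_Nikodym_SigmaFinite.change_of_variables dom K0 measurableT mK).
set rn := Radon_Nikodym_SigmaFinite.f _ _.
have rnint : lebesgue_measure.-integrable setT rn := Radon_Nikodym_SigmaFinite.f_integrable dom.
have mpdf : measurable_fun setT (fun y => (normal_pdf 0 (Num.sqrt s) y)%:E).
  by apply/measurable_EFinP; apply: measurable_normal_pdf.
have ae : ae_eq lebesgue_measure setT rn (fun y => (normal_pdf 0 (Num.sqrt s) y)%:E).
  apply: integral_ae_eq => // E _ mE.
  by rewrite -(Radon_Nikodym_SigmaFinite.f_integral dom mE).
apply: (@le_lt_trans _ _ (\int[lebesgue_measure]_y (K y * (normal_pdf 0 (Num.sqrt s) y)%:E))%E).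
  rewrite le_eqVlt; apply/orP; left; apply/eqP.
  apply: ae_eq_integral => //.
  - apply: emeasurable_funM => //; exact: (measurable_int _ rnint).
  - exact: emeasurable_funM.
  - exact: ae_eqe_mul2l.
set C := (normal_peak (Num.sqrt s) / normal_peak (Num.sqrt (2 * s)) * expR (q ^+ 2 * s))%R.
apply: (@le_lt_trans _ _ (\int[lebesgue_measure]_y (C%:E * (normal_pdf 0 (Num.sqrt (2 * s)) y)%:E))%E).
  apply: ge0_le_integral => //.
  - by move=> y _; rewrite /K /= -EFinM lee_fin mulr_ge0 ?expR_ge0 ?normal_pdf_ge0.
  - exact: emeasurable_funM.
  - apply: emeasurable_funM => //; apply/measurable_EFinP; exact: measurable_normal_pdf.
  - by move=> y _; rewrite /K /= -!EFinM lee_fin gauss_pt.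
rewrite ge0_integralZl_EFin //.
- rewrite integral_normal_pdf mule1; exact: ltry.
- by move=> y _; rewrite lee_fin normal_pdf_ge0.
- by apply/measurable_EFinP; apply: measurable_normal_pdf.
- rewrite /C mulr_ge0 // ?expR_ge0 // mulr_ge0 ?invr_ge0 ?normal_peak_ge0 //.
Qed.
End gauss.

Section helper.
Context {R : realType}.
Local Open Scope ereal_scope.
Lemma bound_from_indep d d2 (T : measurableType d) (T2 : measurableType d2)
  (P : probability T R) (mu : probability R R) (nu : probability T2 R)
  (X0 : T -> R) (Y : T -> T2) (K : T2 -> R) (r : R) :
  measurable_fun setT X0 -> measurable_fun setT Y -> measurable_fun setT K ->
  (forall y, (0 <= K y)%R) ->
  (forall A C, measurable A -> measurable C ->
     P (X0 @^-1` A `&` Y @^-1` C) = mu A * nu C) ->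
  \int[mu]_x (Hf r x)%:E < +oo -> \int[nu]_y (K y)%:E < +oo ->
  \int[P]_w (Hf r (X0 w) * K (Y w))%:E < +oo.
Proof.
move=> mX mY mK K0 ind fH fK.
rewrite (indep_integral _ _ _ _ _ _ _ _ _ mX mY mu nu (Hf r) K ind (measurable_Hf r) mK (@Hf_ge0 R r) K0).
apply: lte_mul_pinfty => //.
- by apply: integral_ge0 => x _; rewrite lee_fin Hf_ge0.
- by rewrite ge0_fin_numE //; apply: integral_ge0 => x _; rewrite lee_fin Hf_ge0.
Qed.
End helper.

Theorem lemma4p2 (R : realType) (d : measure_display) (T : measurableType d)
  (P : probability T R) (r : R) (B : R -> T -> R) (X0 : T -> R)
  (mu : probability R R) :
  0 < r ->
  standard_BM P B ->
  measurable_fun [set: T] X0 ->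
  indep_of_process P X0 B ->
  (forall A : set R, measurable A -> P (X0 @^-1` A) = mu A) ->
  mu [set x : R | (0 < x)%R] = 1%E ->
  (\int[mu]_(x in [set x : R | (0 < x)%R]) (x ^+ 3 * expR (r * x))%:E < +oo)%E ->
  let X := fun (t : R) (w : T) => X0 w + B t w - r * t in
  forall s : R, 0 <= s ->
    (cond_expect P (fun w => (X s w ^+ 3 * expR (r * X s w))%R)
       [set w | (s%:E < hit0 X w)%E] < +oo)%E.
Proof.
move=> r0 [B0 Bcont mB gauss _] mX0 ind lawX0 _ fin X s s0.
rewrite /cond_expect.
set A := [set w | _].
set c := (fine (P A))^-1.
have c0 : 0 <= c by rewrite invr_ge0 fine_ge0 // measure_ge0.
set K := fun b : R => expR ((r + 1) * `|b|).
have mK : measurable_fun setT K.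
  apply: measurableT_comp => //; apply: measurable_funM => //; exact: normr_measurable.
have K0 y : 0 <= K y by apply: expR_ge0.
have fH := @mu_int R mu r fin.
have rect t : 0 <= t -> forall A C, measurable A -> measurable C ->
    P (X0 @^-1` A `&` B t @^-1` C) = (mu A * P (B t @^-1` C))%E.
  move=> t0 A0 C mA mC.
  have := ind A0 mA 1 (fun _ => t) (fun _ => C) (fun _ => t0) (fun _ => mC).
  cbv zeta; rewrite bigcap_const; last by exists ord0.
  move=> ->; rewrite -lawX0 // EFinM !fineK //.
  - apply: fin_num_measure; rewrite -[X in measurable X]setTI; exact: mB.
  - apply: fin_num_measure; rewrite -[X in measurable X]setTI; exact: mX0.
have Ifin : (\int[P]_(w in A) (X s w ^+ 3 * expR (r * X s w))%:E < +oo)%E.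
  apply: (le_lt_trans (@int_le_dom _ _ _ P A (fun w => X s w ^+ 3 * expR (r * X s w)) (fun w => (Hf r (X0 w) * K (B s w))%:E) _ _)).
  - by move=> w; rewrite lee_fin mulr_ge0 ?Hf_ge0.
  - move=> w _; rewrite lee_fin.
    have h : X s w <= posp (X0 w) + `|B s w|.
      rewrite /X; have := posp_ge (X0 w); have := ler_norm (B s w).
      have : 0 <= r * s by rewrite mulr_ge0 // ltW.
      lra.
    exact: (key_ineq _ _ _ _ r0 h).
  have [spos|sle] := ltrP 0 s.
    apply: (@bound_from_indep _ _ _ _ _ P mu (normal_prob 0 (Num.sqrt s))) => //.
    - exact: (mB _ s0).
    - move=> A0 C mA mC; rewrite rect //.
      congr (_ * _)%E.
      have h := gauss 0 s (lexx 0) spos C mC; rewrite subr0 in h.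
      transitivity (P ((fun w => B s w - B 0 w) @^-1` C)); last exact: h.
      by congr (P _); apply/funext => w; rewrite /preimage /= B0 subr0.
    - exact: gauss_int.
  have s00 : s = 0 by apply/eqP; rewrite eq_le sle s0.
  subst s.
  apply: (@bound_from_indep _ _ _ _ _ P mu (\d_(0 : R))) => //.
  - exact: (mB _ (lexx 0)).
  - move=> A0 C mA mC; rewrite rect //.
    congr (_ * _)%E.
    transitivity ((((0:R) \in C)%:R)%:E : \bar R); last exact: (esym (diracE _ _ _)).
    have [C0|C0] := boolP ((0:R) \in C).
      have -> : B 0 @^-1` C = setT.
        by apply/seteqP; split => // w _; rewrite /preimage /= B0; exact/set_mem.
      exact: probability_setT.
    have -> : B 0 @^-1` C = set0.
      apply/seteqP; split => // w; rewrite /preimage /= B0 => C0'.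
      by move: C0; rewrite (mem_set C0').
    exact: measure0.
  - rewrite integral_dirac //=; last exact/measurable_EFinP.
    apply: lte_mul_pinfty => //; last exact: ltry.
rewrite muleC; apply: lte_mul_pinfty => //.
Qed.
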